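(* There exists a simple temporal graph $\mathcal G$ whose non-strict-journey reachability graph is not isomorphic to the reachability graph of any happy temporal graph $\mathcal H$. (For instance, $\mathcal G$ on vertices $a,b,c,d,e$ with edges $ac,ad$ labeled $1$, $bc,de$ labeled $2$, and $cd$ labeled $3$.)
   Context: A temporal graph is a triple $\mathcal G=(V,E,\lambda)$ where $V$ is a finite vertex set, $E$ is a set of undirected edges on $V$, and $\lambda:E\to 2^{\mathbb N}\setminus\{\emptyset\}$ assigns to each edge a nonempty set of presence times. The footprint of $\mathcal G$ is the static graph $(V,E)$. A contact is a pair $(e,t)$ with $e\in E$ and $t\in\lambda(e)$. A journey from $u$ to $v$ is a sequence of contacts $(e_1,t_1),\dots,(e_k,t_k)$, $k\ge 1$, such that $e_1,\dots,e_k$ form a path from $u$ to $v$ in the footprint and $t_1\le t_2\le\dots\le t_k$ (a non-strict journey); it is strict if $t_1<t_2<\dots<t_k$. $\mathcal G$ is proper if $\lambda(e)\cap\lambda(e')=\emptyset$ for any two distinct edges $e,e'$ sharing an endpoint (in a proper graph every journey is strict); simple if $|\lambda(e)|=1$ for every edge $e$; happy if it is both proper and simple. The reachability graph $\mathcal C(\mathcal G)$ (with respect to a chosen journey notion) is the directed graph on $V$ having an arc $(u,v)$, $u\neq v$, if and only if there is a journey from $u$ to $v$. Reachability graphs are compared up to isomorphism of directed graphs. *)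

(* Defs.v *)
From mathcomp Require Import all_boot.
Set Implicit Arguments. Unset Strict Implicit. Unset Printing Implicit Defensive.

(* A temporal graph on a finite vertex type V: an edge relation (the footprint)
   and, for each pair of vertices, a (possibly infinite) set of presence times,
   given as a boolean predicate on nat.  Only the labels of actual edges matter. *)
Record tgraph (V : finType) := TGraph {
  tedge : rel V;
  tlab  : V -> V -> pred nat
}.

Definition tg_wf (V : finType) (G : tgraph V) : Prop :=
  (forall x, ~~ tedge G x x) /\
  (forall x y, tedge G x y = tedge G y x) /\
  (forall x y t, tlab G x y t = tlab G y x t) /\
  (forall x y, tedge G x y -> exists t, tlab G x y t).

Definition tg_simple (V : finType) (G : tgraph V) : Prop :=
  forall x y, tedge G x y -> exists t, forall t', tlab G x y t' <-> t' = t.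

Definition tg_proper (V : finType) (G : tgraph V) : Prop :=
  forall x y z, y != z -> tedge G x y -> tedge G x z ->
    forall t, ~ (tlab G x y t /\ tlab G x z t).

Definition tg_happy (V : finType) (G : tgraph V) : Prop :=
  tg_proper G /\ tg_simple G.

(* A journey from u is encoded as the list of contacts
   [(x1,t1); ...; (xk,tk)] : contact i uses edge x_{i-1} x_i (x_0 = u) at time t_i. *)
Fixpoint jcontacts (V : finType) (G : tgraph V) (x : V) (s : seq (V * nat)) : bool :=
  match s with
  | [::] => true
  | (y, t) :: s' => tedge G x y && tlab G x y t && jcontacts G y s'
  end.

Definition journey (V : finType) (G : tgraph V) (strict : bool)
    (u v : V) (s : seq (V * nat)) : Prop :=
  [/\ s != [::],
      last u (map fst s) = v,
      uniq (u :: map fst s),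
      jcontacts G u s &
      sorted (fun a b : nat => if strict then a < b else a <= b) (map snd s)].

Definition reach (V : finType) (G : tgraph V) (strict : bool) (u v : V) : Prop :=
  u != v /\ exists s, journey G strict u v s.

Definition digraph_iso (V W : finType) (A : V -> V -> Prop) (B : W -> W -> Prop) : Prop :=
  exists f : V -> W, bijective f /\ forall u v, A u v <-> B (f u) (f v).

(* Main.v *)
Require Import Defs.
From mathcomp Require Import all_boot.
From HB Require Import structures.
From mathcomp Require Import zify.
Set Implicit Arguments. Unset Strict Implicit.

Inductive v5 := A | B | C | D | E.
Definition v5_nat x := match x with A=>0|B=>1|C=>2|D=>3|E=>4 end.
Definition nat_v5 n := match n with 0=>Some A|1=>Some B|2=>Some C|3=>Some D|4=>Some E|_=>None end.
Lemma v5K : pcancel v5_nat nat_v5. Proof. by case. Qed.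
HB.instance Definition _ := Countable.copy v5 (pcan_type v5K).
Lemma v5_enumP : Finite.axiom [:: A;B;C;D;E]. Proof. by case. Qed.
HB.instance Definition _ := isFinite.Build v5 v5_enumP.

Definition labG (x y : v5) : nat := match x, y with
 | A,C|C,A|A,D|D,A => 1 | B,C|C,B|D,E|E,D => 2 | C,D|D,C => 3 | _,_ => 0 end.
Definition G : tgraph v5 := TGraph (fun x y => labG x y != 0) (fun x y t => t == labG x y).

Lemma G_wf : tg_wf G.
Proof. split; [by case|split; [by case; case|split]]; [by case; case|].
by move=> x y /= _; exists (labG x y). Qed.
Lemma G_simple : tg_simple G.
Proof. move=> x y _; exists (labG x y) => t' /=; split; [by move/eqP|by move=>->]. Qed.

Lemma Gpos u v s : journey G false u v s -> reach G false u v.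
Proof. move=> J; split; last by exists s.
case: J => Hne <- Hu _ _; case: s Hne Hu => [|[y t] s] //= _ /andP[Hn _].
apply: contra Hn => /eqP ->; exact: mem_last. Qed.

Lemma rBD : reach G false B D. Proof. by apply: (@Gpos _ _ [:: (C,2);(D,3)]). Qed.
Lemma rBC : reach G false B C. Proof. by apply: (@Gpos _ _ [:: (C,2)]). Qed.
Lemma rEC : reach G false E C. Proof. by apply: (@Gpos _ _ [:: (D,2);(C,3)]). Qed.
Lemma rED : reach G false E D. Proof. by apply: (@Gpos _ _ [:: (D,2)]). Qed.
Lemma rCE : reach G false C E. Proof. by apply: (@Gpos _ _ [:: (A,1);(D,1);(E,2)]). Qed.
Lemma rDB : reach G false D B. Proof. by apply: (@Gpos _ _ [:: (A,1);(C,1);(B,2)]). Qed.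
Lemma rDE : reach G false D E. Proof. by apply: (@Gpos _ _ [:: (E,2)]). Qed.
Lemma rCB : reach G false C B. Proof. by apply: (@Gpos _ _ [:: (B,2)]). Qed.

Lemma inv_path (P : v5 -> nat -> bool)
  (cl : forall x y t, P x t -> labG x y != 0 -> t <= labG x y -> P y (labG x y))
  x t0 s : P x t0 -> jcontacts G x s -> path (fun a b : nat => if false then a < b else a <= b) t0 (map snd s) ->
  P (last x (map fst s)) (last t0 (map snd s)).
Proof.
elim: s x t0 => [|[y t] s IH] x t0 //= Px /andP[/andP[e /eqP ->] Hj] /andP[le Hp].
apply: IH => //. exact: cl Px e le. Qed.

Lemma Gneg_gen (P : v5 -> nat -> bool)
  (cl : forall x y t, P x t -> labG x y != 0 -> t <= labG x y -> P y (labG x y))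
  u v s : P u 0 -> journey G false u v s -> exists t, P v t.
Proof.
move=> Pu [_ <- _ Hj Hs]; exists (last 0 (map snd s)).
apply: inv_path => //. case: s Hj Hs => //= [[y t] s] _ ->. Qed.

Definition PB x t := [|| x == B, (x == C) && (2 <= t) | (x == D) && (3 <= t)].
Definition PE x t := [|| x == E, (x == D) && (2 <= t) | (x == C) && (3 <= t)].
Lemma PB_cl x y t : PB x t -> labG x y != 0 -> t <= labG x y -> PB y (labG x y).
Proof. by case: x; case: y => //=; rewrite /PB /=; lia. Qed.
Lemma PE_cl x y t : PE x t -> labG x y != 0 -> t <= labG x y -> PE y (labG x y).
Proof. by case: x; case: y => //=; rewrite /PE /=; lia. Qed.

Lemma nBA : ~ reach G false B A.
Proof. by move=> [_ [s J]]; by case: (Gneg_gen PB_cl _ J). Qed.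
Lemma nBE : ~ reach G false B E.
Proof. by move=> [_ [s J]]; by case: (Gneg_gen PB_cl _ J). Qed.
Lemma nEA : ~ reach G false E A.
Proof. by move=> [_ [s J]]; by case: (Gneg_gen PE_cl _ J). Qed.
Lemma nEB : ~ reach G false E B.
Proof. by move=> [_ [s J]]; by case: (Gneg_gen PE_cl _ J). Qed.

Lemma irr W (H : tgraph W) x : tg_wf H -> tedge H x x = false.
Proof. by case=> h _; exact: negbTE (h x). Qed.

Lemma edge_neq W (H : tgraph W) x y : tg_wf H -> tedge H x y -> x != y.
Proof. move=> wf e; apply/eqP => exy; subst; by rewrite irr in e. Qed.

Lemma edge_reach W (H : tgraph W) x y : tg_wf H -> tedge H x y -> reach H false x y.
Proof.
move=> wf e; have nxy := edge_neq wf e; split => //.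
have [t lt] := wf.2.2.2 _ _ e; exists [:: (y,t)]; split => //=.
- by rewrite inE nxy.
- by rewrite e lt.
Qed.

Lemma lab_uniq W (H : tgraph W) x y t t' : tg_simple H -> tedge H x y ->
  tlab H x y t -> tlab H x y t' -> t = t'.
Proof. move=> s e; have [t0 h] := s _ _ e. by move=> /h -> /h ->. Qed.

Lemma lab_sym W (H : tgraph W) x y t : tg_wf H -> tlab H x y t = tlab H y x t.
Proof. by case=> _ [_ [h _]]. Qed.
Lemma edge_sym W (H : tgraph W) x y : tg_wf H -> tedge H x y = tedge H y x.
Proof. by case=> _ [h _]. Qed.

Lemma two_step W (H : tgraph W) x y z t1 t2 : tg_wf H -> x != z -> tedge H x y -> tedge H y z ->
  tlab H x y t1 -> tlab H y z t2 -> t1 <= t2 -> reach H false x z.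
Proof.
move=> wf nxz e1 e2 l1 l2 le; split => //; exists [:: (y,t1); (z,t2)]; split => //=.
- by rewrite !inE negb_or nxz (edge_neq wf e1) (edge_neq wf e2).
- by rewrite e1 e2 l1 l2.
- by rewrite le.
Qed.

Lemma no_share W (H : tgraph W) x y z : tg_wf H -> tg_proper H -> x != z ->
  tedge H x y -> tedge H y z -> ~ reach H false x z -> ~ reach H false z x -> False.
Proof.
move=> wf pr nxz e1 e2 n1 n2.
have [t1 l1] := wf.2.2.2 _ _ e1; have [t2 l2] := wf.2.2.2 _ _ e2.
have e1' : tedge H y x by rewrite edge_sym.
have e2' : tedge H z y by rewrite edge_sym.
case: (leqP t1 t2) => le.
- by apply: n1; apply: two_step l1 l2 le.
- have l1' : tlab H y x t1 by rewrite lab_sym.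
  have l2' : tlab H z y t2 by rewrite lab_sym.
  apply: n2; apply: (two_step wf _ e2' e1' l2' l1' (ltnW le)); by rewrite eq_sym.
Qed.

Lemma jstep W (H : tgraph W) u v y t s : journey H false u v ((y,t)::s) ->
  [/\ tedge H u y, tlab H u y t, u \notin map fst ((y,t)::s) &
      (s = [::] /\ y = v) \/ (journey H false y v s /\ t <= head t (map snd s))].
Proof.
case=> _ /= Hl /andP[nu Hu] /andP[/andP[e l] Hj] Hs; split => //.
move: nu; case: s Hl Hu Hj Hs => [|[y2 t2] s] /=; first by left.
move=> Hl Hu Hj /andP[le Hs] nu; right; split => //; split => //.
Qed.

Lemma firstL W (H : tgraph W) (f : v5 -> W) :
  tg_wf H -> (forall w, exists x, w = f x) ->
  ~ reach H false (f B) (f A) ->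
  tedge H (f B) (f A) = false -> tedge H (f B) (f D) = false -> tedge H (f B) (f E) = false ->
  tedge H (f C) (f E) = false ->
  reach H false (f B) (f D) ->
  exists t1 t2, [/\ tedge H (f B) (f C), tlab H (f B) (f C) t1, tedge H (f C) (f D), tlab H (f C) (f D) t2 & t1 <= t2].
Proof.
move=> wf cov nBA eBA eBD eBE eCE [nBD [[|[y1 t1] s] J]]; first by case: J.
have [e1 l1 u1 [[_ Hy]|[J2 le1]]] := jstep J; first by rewrite Hy eBD in e1.
have [x1 Hx1] := cov y1; subst y1.
case: x1 J e1 l1 u1 J2 le1 => J e1 l1 u1 J2 le1; try by rewrite ?eBA ?eBE ?eBD ?irr in e1.
case: s J J2 u1 le1 => [|[y2 t2] s] J J2 u1 le1; first by case: J2.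
have [e2 l2 u2 _] := jstep J2; have [x2 Hx2] := cov y2; subst y2.
case: x2 J J2 e2 l2 u2 u1 le1 => J J2 e2 l2 u2 u1 le1 /=; try by rewrite ?eCE ?irr in e2.
- exfalso; apply: nBA; apply: (two_step wf _ e1 e2 l1 l2 le1).
  by apply: contra u1 => /eqP ->; rewrite !inE eqxx !orbT.
- by rewrite !inE eqxx orbT in u1.
- by exists t1, t2.
Qed.

Ltac kill := solve [ match goal with
 | Hf : tedge ?G ?x ?y = false, He : is_true (tedge ?G ?x ?y) |- _ => by rewrite Hf in He
 | wf : tg_wf ?G, He : is_true (tedge ?G ?x ?x) |- _ => by rewrite (irr x wf) in He
 | Hu : is_true (?x \notin _) |- _ => by rewrite !inE eqxx ?orbT in Hu
 | J : journey _ _ _ _ [::] |- _ => by case: J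
 end ].

Lemma secondL W (H : tgraph W) (f : v5 -> W) :
  tg_wf H -> (forall w, exists x, w = f x) ->
  tedge H (f B) (f A) = false -> tedge H (f B) (f D) = false -> tedge H (f B) (f E) = false ->
  tedge H (f A) (f B) = false -> tedge H (f A) (f E) = false -> tedge H (f D) (f B) = false ->
  tedge H (f C) (f E) = false ->
  reach H false (f C) (f E) ->
  (exists t1 t2, [/\ tedge H (f C) (f D), tlab H (f C) (f D) t1, tedge H (f D) (f E), tlab H (f D) (f E) t2 & t1 <= t2]) \/
  (exists t1 t2, [/\ tedge H (f C) (f A), tlab H (f C) (f A) t1, tedge H (f A) (f D), tlab H (f A) (f D) t2 & t1 <= t2]).
Proof.
move=> wf cov eBA eBD eBE eAB eAE eDB eCE [nCE [[|[y1 t1] s] J]]; first by case: J.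
have [e1 l1 u1 [[_ Hy]|[J2 le1]]] := jstep J; first by subst; kill.
have [x1 Hx1] := cov y1; subst y1.
case: x1 J e1 l1 u1 J2 le1 => J e1 l1 u1 J2 le1; try kill;
 (case: s J J2 u1 le1 => [|[y2 t2] s] J J2 u1 le1; first kill);
 (have [e2 l2 u2 [[_ Hy2]|[J3 le2]]] := jstep J2; first (subst; try kill; by left; exists t1, t2));
 have [x2 Hx2] := cov y2; subst y2;
 case: x2 J J2 J3 e2 l2 u2 u1 le1 le2 => J J2 J3 e2 l2 u2 u1 le1 le2 /=; try kill.
- by right; exists t1, t2.
- case: s J J2 J3 u1 u2 le1 le2 => [|[y3 t3] s] J J2 J3 u1 u2 le1 le2; first kill.
  have [e3 l3 u3 [[_ Hy3]|[J4 le3]]] := jstep J3; first (subst; kill).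
  have [x3 Hx3] := cov y3; subst y3.
  by case: x3 J J2 J3 J4 e3 l3 u3 u2 u1 le1 le2 le3 => J J2 J3 J4 e3 l3 u3 u2 u1 le1 le2 le3; kill.
- by left; exists t1, t2.
Qed.

Lemma clash W (H : tgraph W) x y z p q p' q' : tg_wf H -> tg_simple H -> tg_proper H ->
  tedge H x y -> tedge H x z -> y != z ->
  tlab H y x p' -> tlab H x z q -> tlab H z x q' -> tlab H x y p -> p' <= q -> q' <= p -> False.
Proof.
move=> wf si pr exy exz nyz l1 l2 l3 l4 le1 le2.
rewrite (lab_sym _ _ _ wf) in l1; rewrite (lab_sym _ _ _ wf) in l3.
have ep := lab_uniq si exy l1 l4; have eq := lab_uniq si exz l3 l2; subst.
have epq : p = q by apply/eqP; rewrite eqn_leq le1 le2.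
subst; by apply: (pr _ _ _ nyz exy exz q); split.
Qed.

Lemma nonedge W (H : tgraph W) x y : tg_wf H -> ~ reach H false x y ->
  tedge H x y = false /\ tedge H y x = false.
Proof.
move=> wf n; split; apply/negP => e; apply: n; first exact: edge_reach.
by apply: (edge_reach wf); rewrite (edge_sym _ _ wf).
Qed.

Definition sg (x : v5) : v5 := match x with A=>A|B=>E|C=>D|D=>C|E=>B end.

Lemma core W (H : tgraph W) (f : v5 -> W) :
  tg_wf H -> tg_happy H -> injective f -> (forall w, exists x, w = f x) ->
  ~ reach H false (f B) (f A) -> ~ reach H false (f B) (f E) ->
  ~ reach H false (f E) (f A) -> ~ reach H false (f E) (f B) ->
  reach H false (f B) (f D) -> reach H false (f E) (f C) ->
  reach H false (f C) (f E) -> reach H false (f D) (f B) ->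
  tedge H (f B) (f C) -> tedge H (f E) (f D) -> False.
Proof.
move=> wf [pr si] finj cov nBA nBE nEA nEB rBD rEC rCE rDB eBC eED.
have [eBA eAB] := nonedge wf nBA; have [eBE eEB] := nonedge wf nBE.
have [eEA eAE] := nonedge wf nEA.
have nBE' : f B != f E by rewrite (inj_eq finj).
have nEB' : f E != f B by rewrite (inj_eq finj).
have eBD : tedge H (f B) (f D) = false.
  apply/negP => e; apply: (no_share wf pr nBE' e _ nBE nEB); by rewrite (edge_sym _ _ wf).
have eCE : tedge H (f C) (f E) = false.
  by apply/negP => e; apply: (no_share wf pr nBE' eBC e nBE nEB).
have eDB : tedge H (f D) (f B) = false by rewrite (edge_sym _ _ wf).
have eEC : tedge H (f E) (f C) = false by rewrite (edge_sym _ _ wf).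
have covs : forall w, exists x, w = (f \o sg) x.
  by move=> w; have [x ->] := cov w; exists (sg x); case: x.
have [t1 [t2 [eBC' lBC eCD lCD le12]]] := firstL wf cov nBA eBA eBD eBE eCE rBD.
have [t3 [t4 [eED' lED eDC lDC le34]]] :=
  firstL (f := f \o sg) wf covs nEA eEA eEC eEB eDB rEC.
have := secondL wf cov eBA eBD eBE eAB eAE eDB eCE rCE.
have := secondL (f := f \o sg) wf covs eEA eEC eEB eAE eAB eCE eDB rDB.
move=> /= [[a [b [eDC' lDC' eCB lCB leab]]]|[a [b [eDA lDA eAC lAC leab]]]]
         [[c [d [eCD' lCD' eDE lDE lecd]]]|[c [d [eCA lCA eAD lAD lecd]]]].
- apply: (clash wf si pr eDC eDE _ lCD' lDE lED lDC lecd le34); by rewrite (inj_eq finj).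
- apply: (clash wf si pr eCB eCD _ lBC lCD lDC' lCB le12 leab); by rewrite (inj_eq finj).
- apply: (clash wf si pr eDC eDE _ lCD' lDE lED lDC lecd le34); by rewrite (inj_eq finj).
- apply: (clash wf si pr eAC eAD _ lCA lAD lDA lAC lecd leab); by rewrite (inj_eq finj).
Qed.

Definition tau (x : v5) : v5 := match x with C=>D|D=>C|y=>y end.

Lemma nbr W (H : tgraph W) (f : v5 -> W) u v :
  tg_wf H -> (forall w, exists x, w = f x) -> reach H false (f u) v ->
  exists x, tedge H (f u) (f x).
Proof.
move=> wf cov [_ [[|[y t] s] J]]; first by case: J.
have [e _ _ _] := jstep J; have [x Hx] := cov y; subst; by exists x.
Qed.

Theorem mainTheorem7 :
  exists (V : finType) (G : tgraph V),
    [/\ tg_wf G, tg_simple G &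
      forall (W : finType) (H : tgraph W), tg_wf H -> tg_happy H ->
        ~ digraph_iso (reach G false) (reach H false)].
Proof.
exists v5, G; split; [exact: G_wf|exact: G_simple|].
move=> W H wf hap [f [bij iff]].
have finj : injective f := bij_inj bij.
have cov : forall w, exists x, w = f x.
  by case: bij => g fK gK w; exists (g w); rewrite gK.
have tr : forall u v, reach G false u v -> reach H false (f u) (f v).
  by move=> u v /(iff u v).
have ntr : forall u v, ~ reach G false u v -> ~ reach H false (f u) (f v).
  by move=> u v n /(iff u v).
have hBA := ntr _ _ nBA; have hBE := ntr _ _ nBE.
have hEA := ntr _ _ nEA; have hEB := ntr _ _ nEB.
have [eBA _] := nonedge wf hBA; have [eBE _] := nonedge wf hBE.
have [eEA _] := nonedge wf hEA; have [eEB _] := nonedge wf hEB.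
have nBE' : f B != f E by rewrite (inj_eq finj).
have [x eb] := nbr wf cov (tr _ _ rBC).
have [y ee] := nbr wf cov (tr _ _ rED).
have finjt : injective (f \o tau) by apply: inj_comp => //; case; case.
have covt : forall w, exists x, w = (f \o tau) x.
  by move=> w; have [z ->] := cov w; exists (tau z); case: z.
case: x eb => eb; try (by rewrite ?eBA ?eBE ?(irr _ wf) in eb);
  (case: y ee => ee; try (by rewrite ?eEA ?eEB ?(irr _ wf) in ee)).
- by apply: (no_share wf hap.1 nBE' eb _ hBE hEB); rewrite (edge_sym _ _ wf).
- exact: (core wf hap finj cov hBA hBE hEA hEB (tr _ _ rBD) (tr _ _ rEC) (tr _ _ rCE) (tr _ _ rDB) eb ee).
- exact: (core (f := f \o tau) wf hap finjt covt hBA hBE hEA hEB (tr _ _ rBC) (tr _ _ rED) (tr _ _ rDE) (tr _ _ rCB) eb ee).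
- by apply: (no_share wf hap.1 nBE' eb _ hBE hEB); rewrite (edge_sym _ _ wf).
Qed.
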